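(* Let $(u_1,v_1),\ldots,(u_k,v_k)\in\mathbb{R}^2$ and $d\in\mathbb{R}$. Define the symmetric $2^k\times 2^k$ matrix, affine in $x,y,d$, $$L_k(x,y)\;=\;d\cdot I_{2^k}+\begin{bmatrix}x-u_1 & y-v_1\\ y-v_1 & -x+u_1\end{bmatrix}\oplus\cdots\oplus\begin{bmatrix}x-u_k & y-v_k\\ y-v_k & -x+u_k\end{bmatrix}.$$ Then (as polynomial identity, also with $d,u_i,v_i$ treated as indeterminates) $$\det L_k(x,y)\;=\;p_k(x,y):=\prod_{\sigma\in\{0,1\}^k}\Bigl(d-\sum_{i=1}^k(-1)^{\sigma_i}\sqrt{(x-u_i)^2+(y-v_i)^2}\Bigr),$$ and the convex region bounded by the $k$-ellipse satisfies $$\mathcal{E}_k:=\Bigl\{(x,y)\in\mathbb{R}^2:\sum_{i=1}^k\sqrt{(x-u_i)^2+(y-v_i)^2}\le d\Bigr\}=\{(x,y)\in\mathbb{R}^2: L_k(x,y)\succeq 0\}.$$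
   Context: The tensor (Kronecker) sum of an $m\times m$ matrix $A$ and an $n\times n$ matrix $B$ is $A\oplus B:=A\otimes I_n+I_m\otimes B$, an $mn\times mn$ matrix; it is associative, and $M_1\oplus\cdots\oplus M_k=\sum_{j}I\otimes\cdots\otimes M_j\otimes\cdots\otimes I$. $\succeq 0$ means positive semidefinite. *)

(* Defs.v *)
From HB Require Import structures.
From mathcomp Require Import all_boot all_order all_algebra.
From mathcomp Require Import mxtens.
From mathcomp Require Import reals.
Set Implicit Arguments. Unset Strict Implicit. Unset Printing Implicit Defensive.
Import Order.TTheory GRing.Theory Num.Theory.
Local Open Scope ring_scope.

(* Tensor (Kronecker) sum  A (+) B := A (x) I_n + I_m (x) B  (Kronecker product
   = mxtens.tensmx, standard row-major ordering of index pairs). *)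
Definition tenssum (R : pzRingType) (m n : nat) (A : 'M[R]_m) (B : 'M[R]_n)
  : 'M[R]_(m * n) :=
  tensmx A (1%:M : 'M[R]_n) + tensmx (1%:M : 'M[R]_m) B.

(* M_1 (+) (M_2 (+) ( ... (+) M_k)) for the family M_0, ..., M_{k-1}
   (indexed from 0); the empty tensor sum is the 1x1 zero matrix
   (neutral for (+)).  The dimension 2 * 2^k' is cast to 2^(k'.+1). *)
Fixpoint tenssum_seq (R : pzRingType) (k : nat) (M : nat -> 'M[R]_2)
  : 'M[R]_(2 ^ k) :=
  match k return 'M[R]_(2 ^ k) with
  | 0 => 0
  | k'.+1 => castmx (esym (expnS 2 k'), esym (expnS 2 k'))
              (tenssum (M 0%N) (tenssum_seq k' (fun i => M i.+1)))
  end.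

Definition blk (R : pzRingType) (x y u v : R) : 'M[R]_2 :=
  \matrix_(i < 2, j < 2)
    if (i == 0) && (j == 0) then x - u
    else if (i == 1) && (j == 1) then - x + u
    else y - v.

Definition Lk (R : pzRingType) (k : nat) (u v : nat -> R) (d x y : R)
  : 'M[R]_(2 ^ k) :=
  d%:M + tenssum_seq k (fun i => blk x y (u i) (v i)).

Definition psd (R : numDomainType) (n : nat) (A : 'M[R]_n) : Prop :=
  A^T = A /\ forall z : 'cV[R]_n, 0 <= (z^T *m A *m z) 0 0.

(* Main.v *)
Require Import Defs.
From HB Require Import structures.
From mathcomp Require Import all_boot all_order all_algebra.
From mathcomp Require Import mxtens.
From mathcomp Require Import reals.
From mathcomp Require Import ring lra.
Import Order.TTheory GRing.Theory Num.Theory.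
Local Open Scope ring_scope.
Section S.
Variable R : realType.

Lemma normalize (a b r p q : R) : p ^+ 2 + q ^+ 2 != 0 ->
  a * p + b * q = r * p -> b * p - a * q = r * q ->
  exists c s : R, c ^+ 2 + s ^+ 2 = 1 /\ a * c + b * s = r * c /\ b * c - a * s = r * s.
Proof.
move=> nz e1 e2.
have h0 : 0 <= p ^+ 2 + q ^+ 2 by rewrite addr_ge0 // sqr_ge0.
set N := Num.sqrt (p ^+ 2 + q ^+ 2).
have hN : N ^+ 2 = p ^+ 2 + q ^+ 2 by rewrite sqr_sqrtr.
have Nnz : N != 0 by apply: contraNneq nz => hN0; rewrite -hN hN0 expr0n.
exists (p / N), (q / N); split; last split.
- by rewrite !expr_div_n -mulrDl hN divff.
- by rewrite !mulrA -mulrDl e1.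
- by rewrite !mulrA -mulrBl e2.
Qed.

Lemma eig2 (a b : R) : let r := Num.sqrt (a ^+ 2 + b ^+ 2) in
  exists c s : R, c ^+ 2 + s ^+ 2 = 1 /\ a * c + b * s = r * c /\ b * c - a * s = r * s.
Proof.
move=> r.
have h0 : 0 <= a ^+ 2 + b ^+ 2 by rewrite addr_ge0 // sqr_ge0.
have hr : r ^+ 2 = a ^+ 2 + b ^+ 2 by rewrite sqr_sqrtr.
have [z1|nz1] := eqVneq ((a + r) ^+ 2 + b ^+ 2) 0; last first.
  apply: (@normalize a b r (a + r) b nz1); first nra.
  by ring.
have [z2|nz2] := eqVneq (b ^+ 2 + (r - a) ^+ 2) 0; last first.
  apply: (@normalize a b r b (r - a) nz2); last nra.
  by ring.
have hb : b = 0 by nra.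
have ha : a + r = 0 by nra.
have ha' : r - a = 0 by nra.
exists 1, 0; split; first by rewrite expr1n expr0n addr0.
rewrite hb; split; lra.
Qed.
Definition Lam (r : R) : 'rV[R]_2 := \row_j (if j == 0 then - r else r).

Lemma blk_decomp (x y u v : R) :
  exists Q : 'M[R]_2, Q^T *m Q = 1%:M /\ Q *m Q^T = 1%:M /\
  blk x y u v = Q *m diag_mx (Lam (Num.sqrt ((x - u) ^+ 2 + (y - v) ^+ 2))) *m Q^T.
Proof.
have [c [s [h1 [h2 h3]]]] := eig2 (x - u) (y - v).
set r := Num.sqrt _ in h2 h3 *.
have ea : x - u = r * (c ^+ 2 - s ^+ 2).
  rewrite -[LHS]mulr1 -h1; transitivity (c * ((x - u) * c + (y - v) * s) - s * ((y - v) * c - (x - u) * s)); first ring.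
  by rewrite h2 h3; ring.
have eb : y - v = r * (c * s *+ 2).
  rewrite -[LHS]mulr1 -h1; transitivity (s * ((x - u) * c + (y - v) * s) + c * ((y - v) * c - (x - u) * s)); first ring.
  by rewrite h2 h3; ring.
exists (\matrix_(i < 2, j < 2) if i == 0 then (if j == 0 then - s else c)
                               else (if j == 0 then c else s)).
split; last split; apply/matrixP => i j; rewrite !mxE !big_ord_recl !big_ord0 !mxE;
  rewrite ?big_ord_recl ?big_ord0 ?mxE;
  case: i => [[|[|//]] Hi]; case: j => [[|[|//]] Hj] /=.
all: rewrite ?ea ?eb.
all: try nra.
Qed.

Lemma tens_diag m n (a : 'rV[R]_m) (b : 'rV[R]_n) :
  diag_mx a *t diag_mx b =
  diag_mx (\row_k (a 0 (mxtens_unindex k).1 * b 0 (mxtens_unindex k).2)).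
Proof.
apply/matrixP => i j; case: (mxtens_indexP i) => i0 i1; case: (mxtens_indexP j) => j0 j1.
rewrite tensmxE !mxE mxtens_indexK /= (inj_eq (can_inj (@mxtens_indexK m n))) xpair_eqE.
by case: eqP; case: eqP; rewrite ?mulr0n ?mulr1n ?mulr0 ?mul0r.
Qed.

Lemma tens11 m n : (1%:M : 'M[R]_m) *t (1%:M : 'M[R]_n) = 1%:M.
Proof.
rewrite -!diag_const_mx tens_diag; congr diag_mx; apply/rowP => k; by rewrite !mxE mulr1.
Qed.

Definition decomp n (T : 'M[R]_n) (P : (R -> R) -> R) :=
  exists (Q : 'M[R]_n) (e : 'rV[R]_n), Q^T *m Q = 1%:M /\ Q *m Q^T = 1%:M /\
   T = Q *m diag_mx e *m Q^T /\ forall F, \prod_(j < n) F (e 0 j) = P F.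

Arguments decomp {n}.

Lemma decomp_cast (n n' : nat) (p : n = n') (T : 'M[R]_n) P : decomp T P -> decomp (castmx (p, p) T) P.
Proof. by case: n' / p; rewrite castmx_id. Qed.

Lemma decomp_ext n (T : 'M[R]_n) P P' : (forall F, P F = P' F) -> decomp T P -> decomp T P'.
Proof. move=> e [Q [f [h1 [h2 [h3 h4]]]]]; exists Q, f; do 3!split => //. by move=> F; rewrite h4. Qed.

Lemma decomp_tens m n (A : 'M[R]_m) (B : 'M[R]_n) PA PB :
  decomp A PA -> decomp B PB ->
  decomp (tenssum A B) (fun F => PA (fun t => PB (fun t' => F (t + t')))).
Proof.
move=> [QA [a [A1 [A2 [A3 A4]]]]] [QB [b [B1 [B2 [B3 B4]]]]].
exists (QA *t QB), (\row_k (a 0 (mxtens_unindex k).1 + b 0 (mxtens_unindex k).2)).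
split; first by rewrite trmx_tens tensmx_mul A1 B1 tens11.
split; first by rewrite trmx_tens tensmx_mul A2 B2 tens11.
split.
  rewrite /tenssum A3 B3.
  have -> : (QA *m diag_mx a *m QA^T) *t 1%:M =
     (QA *t QB) *m (diag_mx a *t 1%:M) *m (QA *t QB)^T.
    by rewrite trmx_tens !tensmx_mul mulmx1 B2.
  have -> : 1%:M *t (QB *m diag_mx b *m QB^T) =
     (QA *t QB) *m (1%:M *t diag_mx b) *m (QA *t QB)^T.
    by rewrite trmx_tens !tensmx_mul mulmx1 A2.
  rewrite -mulmxDl -mulmxDr; congr (_ *m _ *m _).
  rewrite -!diag_const_mx !tens_diag; apply/matrixP => i j; rewrite !mxE.
  by case: (i == j); rewrite ?mulr1n ?mulr0n ?addr0 // mulr1 mul1r.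
move=> F.
transitivity (\prod_(i < m) \prod_(j < n) F (a 0 i + b 0 j)); last first.
  by rewrite -A4; apply: eq_bigr => i _; rewrite -B4.
rewrite pair_big (reindex (@mxtens_index m n)).
  by apply: eq_bigr => p _; rewrite mxE mxtens_indexK.
by exists (@mxtens_unindex m n) => i _; rewrite (mxtens_indexK, mxtens_unindexK).
Qed.

Arguments decomp_tens {m n A B PA PB}.
Arguments decomp_ext {n T P P'}.

Definition fcons k (b : bool) (s : {ffun 'I_k -> bool}) : {ffun 'I_k.+1 -> bool} :=
  [ffun i => if unlift ord0 i is Some j then s j else b].

Arguments fcons {k}.

Lemma prod_ffunS k (G : {ffun 'I_k.+1 -> bool} -> R) :
  \prod_s G s = \prod_(b : bool) \prod_(s' : {ffun 'I_k -> bool}) G (fcons b s').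
Proof.
rewrite pair_big /= (reindex (fun p : bool * {ffun 'I_k -> bool} => fcons p.1 p.2)) //=.
exists (fun s => (s ord0, [ffun j => s (lift ord0 j)])) => [[b s'] _ | s _] /=.
  rewrite /fcons ffunE unlift_none; congr pair; apply/ffunP => j; by rewrite !ffunE liftK.
apply/ffunP => i; rewrite ffunE; case: unliftP => [j ->|->]; by rewrite ?ffunE.
Qed.

Lemma sum_fcons k b (s : {ffun 'I_k -> bool}) (lam : nat -> R) :
  \sum_(i < k.+1) (-1) ^+ (fcons b s i : nat) * lam i =
  (-1) ^+ (b : nat) * lam 0%N + \sum_(i < k) (-1) ^+ (s i : nat) * lam i.+1.
Proof.
rewrite big_ord_recl /fcons ffunE unlift_none; congr (_ + _).
by apply: eq_bigr => i _; rewrite ffunE liftK lift0.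
Qed.

Lemma main_decomp k (u v : nat -> R) (x y : R) :
  decomp (tenssum_seq k (fun i => blk x y (u i) (v i)))
    (fun F => \prod_(s : {ffun 'I_k -> bool})
        F (- \sum_(i < k) (-1) ^+ (s i : nat) *
               Num.sqrt ((x - u i) ^+ 2 + (y - v i) ^+ 2))).
Proof.
elim: k u v => [|k IH] u v /=.
  exists 1%:M, 0; split; first by rewrite trmx1 mulmx1.
  split; first by rewrite trmx1 mulmx1.
  split; first by rewrite linear0 mulmx0 mul0mx.
  move=> F; rewrite big_ord1 mxE.
  under eq_bigr do rewrite big_ord0 oppr0.
  by rewrite big_const card_ffun !card_ord /= mulr1.
apply: decomp_cast.
have [Q0 [Q1 [Q2 Q3]]] := blk_decomp x y (u 0%N) (v 0%N).
set r := Num.sqrt _ in Q3.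
have D0 : decomp (blk x y (u 0%N) (v 0%N)) (fun F => \prod_(j < 2) F (Lam r 0 j)).
  by exists Q0, (Lam r).
have T1 := decomp_tens D0 (IH (fun i => u i.+1) (fun i => v i.+1)).
apply: (decomp_ext _ T1).
move=> F /=.
rewrite prod_ffunS big_bool /= !big_ord_recl big_ord0 mulr1 !mxE /= mulrC.
congr (_ * _); apply: eq_bigr => s _; rewrite (sum_fcons _ _ _ (fun i : nat => Num.sqrt ((x - u i) ^+ 2 + (y - v i) ^+ 2))) opprD /=.
  by rewrite expr1 mulN1r opprK.
by rewrite expr0 mul1r.
Qed.

Lemma psd_decomp n (Q : 'M[R]_n) (e : 'rV[R]_n) :
  Q^T *m Q = 1%:M -> Q *m Q^T = 1%:M ->
  psd (Q *m diag_mx e *m Q^T) <-> forall j, 0 <= e 0 j.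
Proof.
move=> Q1 Q2; split.
  move=> [_ H] j; have := H (Q *m delta_mx j 0).
  rewrite !trmx_mul !mulmxA -(mulmxA _ Q^T Q) Q1 mulmx1 -(mulmxA _ Q^T Q) Q1 mulmx1.
  by rewrite trmx_delta -rowE -colE !mxE eqxx mulr1n.
move=> H; split.
  by rewrite !trmx_mul trmxK tr_diag_mx mulmxA.
move=> z; set w := Q^T *m z.
have -> : z^T *m (Q *m diag_mx e *m Q^T) *m z = w^T *m (diag_mx e *m w).
  by rewrite /w trmx_mul trmxK !mulmxA.
rewrite mul_diag_mx mxE; apply: sumr_ge0 => i _; rewrite !mxE.
by rewrite mulrCA mulr_ge0 // -expr2 sqr_ge0.
Qed.

Lemma prod01 (I : finType) (P : pred I) :
  (\prod_i (if P i then 1 else 0 : R) = 1) <-> (forall i, P i).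
Proof.
split; last by move=> h; rewrite big1 // => i _; rewrite h.
move=> h i; apply/negPn/negP => nPi; move: h.
rewrite (bigD1 i) //= (negbTE nPi) mul0r => /eqP; by rewrite eq_sym oner_eq0.
Qed.

End S.

Theorem theorem2p3 (R : realType) (k : nat) (u v : nat -> R) (d : R) :
  (forall x y : R,
     \det (Lk k u v d x y) =
     \prod_(s : {ffun 'I_k -> bool})
        (d - \sum_(i < k) (-1) ^+ (s i : nat) *
               Num.sqrt ((x - u i) ^+ 2 + (y - v i) ^+ 2)))
  /\
  (forall x y : R,
     (\sum_(i < k) Num.sqrt ((x - u i) ^+ 2 + (y - v i) ^+ 2) <= d)
     <-> psd (Lk k u v d x y)).
Proof.
have key : forall x y : R, exists (Q : 'M[R]_(2 ^ k)) (e : 'rV[R]_(2 ^ k)),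
   Q^T *m Q = 1%:M /\ Q *m Q^T = 1%:M /\ Lk k u v d x y = Q *m diag_mx e *m Q^T /\
   forall F : R -> R, \prod_j F (e 0 j) = \prod_(s : {ffun 'I_k -> bool})
        F (d - \sum_(i < k) (-1) ^+ (s i : nat) *
               Num.sqrt ((x - u i) ^+ 2 + (y - v i) ^+ 2)).
  move=> x y; have [Q [e0 [Q1 [Q2 [Q3 Q4]]]]] := main_decomp R k u v x y.
  exists Q, (\row_j (d + e0 0 j)); split => //; split => //; split.
    rewrite /Lk Q3.
    have -> : (d%:M : 'M[R]_(2 ^ k)) = Q *m d%:M *m Q^T.
      by rewrite mul_mx_scalar -scalemxAl Q2 scalemx1.
    rewrite -mulmxDl -mulmxDr -diag_const_mx -raddfD /=; congr (_ *m diag_mx _ *m _).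
    by apply/rowP => j; rewrite !mxE.
  by move=> F; rewrite -(Q4 (fun t => F (d + t))); apply: eq_bigr => j _; rewrite mxE.
split.
  move=> x y; have [Q [e [Q1 [Q2 [Q3 Q4]]]]] := key x y.
  rewrite Q3 !det_mulmx mulrAC -det_mulmx Q2 det1 mul1r det_diag.
  exact: (Q4 id).
move=> x y; have [Q [e [Q1 [Q2 [Q3 Q4]]]]] := key x y.
rewrite Q3 psd_decomp //.
rewrite -(@prod01 R _ (fun j => 0 <= e 0 j)) (Q4 (fun t => if 0 <= t then 1 else 0)).
rewrite (@prod01 R _ (fun s : {ffun 'I_k -> bool} => 0 <= d - \sum_(i < k) (-1) ^+ (s i : nat) *
               Num.sqrt ((x - u i) ^+ 2 + (y - v i) ^+ 2))).
split.
  move=> H s; rewrite subr_ge0; apply: le_trans H; apply: ler_sum => i _.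
  have := sqrtr_ge0 ((x - u i) ^+ 2 + (y - v i) ^+ 2).
  by case: (s i) => /=; rewrite ?expr1 ?expr0 ?mulN1r ?mul1r //; lra.
move=> /(_ [ffun _ => false]); rewrite subr_ge0.
by under eq_bigr do rewrite ffunE expr0 mul1r.
Qed.
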